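(* Let $m\ge1$, $j\in\{0,\ldots,m-1\}$ and let $M_j$ be as in the context (PNS or PNGS version). For every $z'\in M_j$ there is $\epsilon>0$ such that for all $z\in M_j$ with $\|z-z'\|<\epsilon$: $z$ and $z'$ are in optimal position (i.e. $\|z'-z\|=\min_{R\in O(m-j)}\|z'-zR\|$) if and only if $z^Tz'-z'^Tz=0$.
   Context: $\|\cdot\|$ is the Frobenius norm; $O(k,n)=\{v\in\mathbb R^{n\times k}:v^Tv=I_k\}$; $O(k)$ is the orthogonal group; $\mathbb D^k$ and $\mathbb S^{k-1}$ are the open unit ball and unit sphere of $\mathbb R^k$. For $j\in\{1,\ldots,m-1\}$, PNS version: $M_j=\{\binom{v}{\alpha^T}: v\in O(m-j,m+1),\alpha\in\mathbb D^{m-j}\}\subset\mathbb R^{(m+2)\times(m-j)}$; PNGS version: the same with $\alpha=0$. For $j=0$: $M_0=\{\binom{v}{\alpha^T}: v\in O(m,m+1),\alpha\in\mathbb S^{m-1}\}$. $O(m-j)$ acts on $M_j$ from the right by $z\mapsto zR$. *)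

(* Defs.v *)
From mathcomp Require Import all_boot all_order all_algebra.
Set Implicit Arguments. Unset Strict Implicit. Unset Printing Implicit Defensive.
Import Order.TTheory GRing.Theory Num.Theory.
Local Open Scope ring_scope.

Definition frob (R : rcfType) (p q : nat) (A : 'M[R]_(p, q)) : R :=
  Num.sqrt (\sum_(i < p) \sum_(l < q) A i l ^+ 2).

Definition orthmx (R : rcfType) (k : nat) (Q : 'M[R]_k) : Prop :=
  Q^T *m Q = 1%:M.

Definition stiefel (R : rcfType) (n k : nat) (v : 'M[R]_(n, k)) : Prop :=
  v^T *m v = 1%:M.

(* M_j inside R^{(m+2) x (m-j)}; z = (v ; alpha^T) with v the upper (m+1)
   rows and alpha^T the last row.  pns = true: PNS version (alpha in the
   open unit ball), pns = false: PNGS version (alpha = 0). *)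
Definition Mj (R : rcfType) (pns : bool) (m j : nat)
    (z : 'M[R]_(m.+1 + 1, m - j)) : Prop :=
  stiefel (usubmx z) /\
  (if j == 0%N then frob (dsubmx z) == 1
   else if pns then frob (dsubmx z) < 1 else dsubmx z == 0).

Definition optimal_position (R : rcfType) (n k : nat) (z z' : 'M[R]_(n, k)) : Prop :=
  forall Q : 'M[R]_k, orthmx Q -> frob (z' - z) <= frob (z' - z *m Q).

(* Main.v *)
Require Import Defs.
From mathcomp Require Import all_boot all_order all_algebra.
From mathcomp Require Import ring lra.
Set Implicit Arguments. Unset Strict Implicit. Unset Printing Implicit Defensive.
Import Order.TTheory GRing.Theory Num.Theory.
Local Open Scope ring_scope.

Section S.
Variable R : rcfType.

Definition fn2 p q (X : 'M[R]_(p,q)) : R := \sum_(i < p) \sum_(l < q) X i l ^+ 2.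

Lemma fn2_ge0 p q (X : 'M[R]_(p,q)) : 0 <= fn2 X.
Proof. by apply: sumr_ge0 => i _; apply: sumr_ge0 => l _; exact: sqr_ge0. Qed.

Lemma fn2_tr p q (X : 'M[R]_(p,q)) : fn2 X = \tr (X^T *m X).
Proof.
rewrite /fn2 /mxtrace exchange_big /=; apply: eq_bigr => l _.
rewrite !mxE; apply: eq_bigr => i _; by rewrite !mxE expr2.
Qed.

Lemma fn2_opt n k (z z' : 'M[R]_(n,k)) Q : Q *m Q^T = 1%:M ->
  fn2 (z' - z *m Q) = fn2 z' + fn2 z - 2 * \tr (z'^T *m z *m Q).
Proof.
rewrite !fn2_tr => QQ.
rewrite [(z' - _)^T]linearB /= trmx_mul !mulmxBl !mulmxBr !linearB /=.
have e1: \tr (Q^T *m z^T *m (z *m Q)) = \tr (z^T *m z).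
  by rewrite mxtrace_mulC !mulmxA -(mulmxA z) QQ mulmx1 mxtrace_mulC.
have e2: \tr (Q^T *m z^T *m z') = \tr (z'^T *m z *m Q).
  by rewrite -mxtrace_tr !trmx_mul !trmxK mulmxA.
rewrite e1 e2 mulmxA; lra.
Qed.

Lemma tr_delta k (A : 'M[R]_k) i l : \tr (A *m delta_mx i l) = A l i.
Proof.
rewrite /mxtrace (bigD1 l) //= big1 ?addr0.
  rewrite mxE (bigD1 i) //= big1 ?addr0 ?mxE ?eqxx ?mulr1 //.
  by move=> q /negbTE ql; rewrite mxE ql mulr0.
move=> p /negbTE pi; rewrite mxE big1 // => q _; by rewrite mxE pi andbF mulr0.
Qed.

Lemma abs_orth k (D P : 'M[R]_k) (a s : R) :
  D *m D = D -> D *m P = P -> P *m D = P -> P *m P = - D -> D^T = D -> P^T = - P ->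
  (1%:M + a *: D + s *: P)^T *m (1%:M + a *: D + s *: P) =
  1%:M + (2 * a + a ^+ 2 + s ^+ 2) *: D.
Proof.
move=> DD DP PD PP DT PT.
rewrite !linearD /= !linearZ /= trmx1 DT PT.
rewrite !mulmxDl !mulmx1 !mul1mx -!scalemxAl !mulNmx DD DP PD PP.
apply/matrixP => x y; rewrite !mxE; ring.
Qed.


Lemma givens_tr k (A : 'M[R]_k) (i l : 'I_k) (a s : R) : i != l ->
  a ^+ 2 + 2 * a + s ^+ 2 = 0 ->
  exists Q : 'M[R]_k, orthmx Q /\
    \tr (A *m Q) = \tr A + a * (A i i + A l l) + s * (A l i - A i l).
Proof.
move=> il h.
have li : l != i by rewrite eq_sym.
move/negbTE: il => il; move/negbTE: li => li.
pose D : 'M[R]_k := delta_mx i i + delta_mx l l.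
pose P : 'M[R]_k := delta_mx i l - delta_mx l i.
exists (1%:M + a *: D + s *: P); split.
  rewrite /orthmx abs_orth.
  - by rewrite (_ : 2 * a + a ^+ 2 + s ^+ 2 = 0) ?scale0r ?addr0 //; lra.
  - rewrite /D /P ?mulmxDl ?mulmxDr ?mulmxBl ?mulmxBr ?mulmxN ?mulNmx !mul_delta_mx_cond ?eqxx ?il ?li ?mulr1n ?mulr0n.
    by apply/matrixP=> x y; rewrite !mxE; lra.
  - rewrite /D /P ?mulmxDl ?mulmxDr ?mulmxBl ?mulmxBr ?mulmxN ?mulNmx !mul_delta_mx_cond ?eqxx ?il ?li ?mulr1n ?mulr0n.
    by apply/matrixP=> x y; rewrite !mxE; lra.
  - rewrite /D /P ?mulmxDl ?mulmxDr ?mulmxBl ?mulmxBr ?mulmxN ?mulNmx !mul_delta_mx_cond ?eqxx ?il ?li ?mulr1n ?mulr0n.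
    by apply/matrixP=> x y; rewrite !mxE; lra.
  - rewrite /D /P ?mulmxDl ?mulmxDr ?mulmxBl ?mulmxBr ?mulmxN ?mulNmx !mul_delta_mx_cond ?eqxx ?il ?li ?mulr1n ?mulr0n.
    by apply/matrixP=> x y; rewrite !mxE; lra.
  - by rewrite /D linearD /= !trmx_delta.
  - by rewrite /P linearB /= !trmx_delta opprB.
rewrite !mulmxDr mulmx1 -!scalemxAr !mxtraceD !mxtraceZ /D /P mulmxDr mulmxBr mxtraceD.
by rewrite linearB /= !tr_delta.
Qed.

Lemma sym_of_opt k (A : 'M[R]_k) :
  (forall Q, orthmx Q -> \tr (A *m Q) <= \tr A) -> forall i l, A i l = A l i.
Proof.
move=> H i l; case: (eqVneq i l) => [-> //|il].
set S := A i i + A l l; set Dd := A l i - A i l.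
have key : forall t : R, t * Dd <= t ^+ 2 * S.
  move=> t.
  have t0 : 0 < 1 + t ^+ 2 by rewrite ltr_pwDl ?sqr_ge0.
  have t0' : 1 + t ^+ 2 != 0 by rewrite gt_eqF.
  have [Q [oQ trQ]] := @givens_tr k A i l (- (2 * t ^+ 2) / (1 + t ^+ 2)) (2 * t / (1 + t ^+ 2)) il
     ltac:(by field).
  have := H Q oQ; rewrite trQ.
  have -> : \tr A + - (2 * t ^+ 2) / (1 + t ^+ 2) * (A i i + A l l) +
      2 * t / (1 + t ^+ 2) * (A l i - A i l) =
      \tr A + (2 * (t * Dd - t ^+ 2 * S)) / (1 + t ^+ 2) by rewrite /S /Dd; field.
  move=> hh; have : (2 * (t * Dd - t ^+ 2 * S)) / (1 + t ^+ 2) <= 0 by lra.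
  rewrite pmulr_lle0 ?invr_gt0 //; lra.
suff : Dd == 0 by rewrite /Dd subr_eq0 => /eqP.
set u := `|S| + 1.
have u0 : 0 < u by rewrite /u ltr_pwDr ?normr_ge0.
set e := (2 * u)^-1.
have e0 : 0 < e by rewrite invr_gt0; lra.
have eu : e * u = 2^-1 by rewrite /e invfM -mulrA mulVf ?mulr1 // gt_eqF.
have := key (e * Dd).
have hS : S <= u by rewrite /u; have := ler_norm S; lra.
have hD : 0 <= Dd ^+ 2 by exact: sqr_ge0.
have h1 : (e * Dd) ^+ 2 * S <= (e * Dd) ^+ 2 * u by rewrite ler_wpM2l ?sqr_ge0.
have h2 : (e * Dd) ^+ 2 * u = e * Dd ^+ 2 * 2^-1.
  by rewrite -eu; ring.
move=> h; rewrite -sqrf_eq0 eq_le hD andbT.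
have h3 : e * Dd ^+ 2 <= e * Dd ^+ 2 * 2^-1.
  by rewrite -h2 expr2 mulrA; exact: le_trans h h1.
have h4 : e * Dd ^+ 2 <= 0 by lra.
by rewrite -(pmulr_rle0 _ e0).
Qed.


Lemma cs n (a b : 'I_n -> R) :
  (\sum_q a q * b q) ^+ 2 <= (\sum_q a q ^+ 2) * (\sum_q b q ^+ 2).
Proof.
set A := \sum_q a q ^+ 2; set B := \sum_q b q ^+ 2; set C := \sum_q a q * b q.
have hAB : A * B = \sum_p \sum_q a p ^+ 2 * b q ^+ 2.
  by rewrite mulr_suml; apply: eq_bigr => p _; rewrite mulr_sumr.
have hBA : A * B = \sum_p \sum_q a q ^+ 2 * b p ^+ 2 by rewrite hAB exchange_big.
have hC : C ^+ 2 = \sum_p \sum_q (a p * b p) * (a q * b q).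
  by rewrite expr2 mulr_suml; apply: eq_bigr => p _; rewrite mulr_sumr.
have h0 : 0 <= \sum_p \sum_q (a p * b q - a q * b p) ^+ 2.
  by apply: sumr_ge0 => p _; apply: sumr_ge0 => q _; exact: sqr_ge0.
have hE : \sum_p \sum_q (a p * b q - a q * b p) ^+ 2 = A * B + A * B - 2 * C ^+ 2.
  rewrite [in RHS]hC {1}hAB hBA mulr_sumr -sumrN -!big_split /=.
  apply: eq_bigr => p _; rewrite mulr_sumr -sumrN -!big_split /=.
  by apply: eq_bigr => q _; ring.
lra.
Qed.

Lemma fn2_mul p n k (E : 'M[R]_(p, n)) (C : 'M[R]_(n, k)) :
  fn2 (E *m C) <= fn2 E * fn2 C.
Proof.
rewrite /fn2 mulr_suml; apply: ler_sum => r _.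
rewrite [X in _ <= _ * X]exchange_big /= mulr_sumr; apply: ler_sum => l _.
by rewrite mxE; exact: cs.
Qed.

Lemma fn2_col p q k (X : 'M[R]_(p, k)) (Y : 'M[R]_(q, k)) :
  fn2 (col_mx X Y) = fn2 X + fn2 Y.
Proof.
rewrite /fn2 big_split_ord /=; congr (_ + _); apply: eq_bigr => i _;
  apply: eq_bigr => l _; by rewrite ?col_mxEu ?col_mxEd.
Qed.

Lemma fn2_stiefel p q k (z : 'M[R]_(p + q, k)) n (C : 'M[R]_(k, n)) :
  stiefel (usubmx z) -> fn2 C <= fn2 (z *m C).
Proof.
move=> hu; rewrite -[z]vsubmxK mul_col_mx fn2_col.
have -> : fn2 (usubmx z *m C) = fn2 C.
  by rewrite !fn2_tr trmx_mul -mulmxA (mulmxA _ (usubmx z)) hu mul1mx.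
have := fn2_ge0 (dsubmx z *m C); lra.
Qed.

Lemma fn2N p q (X : 'M[R]_(p, q)) : fn2 (- X) = fn2 X.
Proof. by rewrite /fn2; apply: eq_bigr => i _; apply: eq_bigr => l _; rewrite mxE sqrrN. Qed.

Lemma backward p q k (z z' : 'M[R]_(p + q, k)) :
  stiefel (usubmx z) -> stiefel (usubmx z') -> fn2 (z - z') <= 1 ->
  z^T *m z' = z'^T *m z ->
  forall Q, orthmx Q -> \tr (z'^T *m z *m Q) <= \tr (z'^T *m z).
Proof.
move=> hz hz' hE hsym Q oQ.
have QQ : Q *m Q^T = 1%:M by apply: mulmx1C.
set A := z'^T *m z.
have AT : A^T = A by rewrite /A trmx_mul trmxK -hsym.
set C : 'M[R]_k := 1%:M - Q.
have key1 : \tr (C^T *m (A *m C)) = 2 * (\tr A - \tr (A *m Q)).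
  rewrite mxtrace_mulC -mulmxA /C linearB /= trmx1 mulmxBl !mulmxBr !mulmx1 !mul1mx QQ.
  rewrite mulmx1 !linearB /=.
  have -> : \tr (A *m Q^T) = \tr (A *m Q).
    by rewrite -mxtrace_tr trmx_mul trmxK AT mxtrace_mulC.
  lra.
have key2 : 0 <= \tr (C^T *m (A *m C)).
  set X := z' *m C; set Y := z *m C.
  have -> : C^T *m (A *m C) = X^T *m Y by rewrite /X /Y /A trmx_mul !mulmxA.
  have hYX : fn2 (Y - X) = fn2 X + fn2 Y - 2 * \tr (X^T *m Y).
    rewrite !fn2_tr [(Y - X)^T]linearB /= mulmxBl !mulmxBr !linearB /=.
    have -> : \tr (X^T *m Y) = \tr (Y^T *m X) by rewrite -mxtrace_tr trmx_mul trmxK.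
    lra.
  have h1 : fn2 (Y - X) <= fn2 C.
    rewrite /X /Y -mulmxBl; apply: le_trans (fn2_mul _ _) _.
    by apply: ler_piMl => //; exact: fn2_ge0.
  have h2 := fn2_stiefel C hz; have h3 := fn2_stiefel C hz'.
  rewrite -/X -/Y in h2 h3.
  have := fn2_ge0 C; lra.
lra.
Qed.

Lemma opt_iff n k (z z' : 'M[R]_(n, k)) :
  optimal_position z z' <->
  (forall Q, orthmx Q -> \tr (z'^T *m z *m Q) <= \tr (z'^T *m z)).
Proof.
have o1 : orthmx (1%:M : 'M[R]_k) by rewrite /orthmx trmx1 mulmx1.
have e1 : z' - z = z' - z *m 1%:M by rewrite mulmx1.
split => H Q oQ.
- have QQ : Q *m Q^T = 1%:M by apply: mulmx1C.
  have := H Q oQ; rewrite /frob -/(fn2 _) -/(fn2 _) ler_sqrt ?fn2_ge0 //.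
  rewrite e1 !fn2_opt // ?trmx1 ?mulmx1 //; lra.
- have QQ : Q *m Q^T = 1%:M by apply: mulmx1C.
  rewrite /frob -/(fn2 _) -/(fn2 _) ler_sqrt ?fn2_ge0 //.
  rewrite e1 !fn2_opt // ?trmx1 ?mulmx1 //; have := H Q oQ; lra.
Qed.

End S.

Theorem corollary2p7 (R : rcfType) (pns : bool) (m j : nat) :
  (1 <= m)%N -> (j < m)%N ->
  forall z' : 'M[R]_(m.+1 + 1, m - j), Mj pns z' ->
  exists2 eps : R, 0 < eps &
    forall z : 'M[R]_(m.+1 + 1, m - j), Mj pns z -> frob (z - z') < eps ->
      (optimal_position z z' <-> z^T *m z' - z'^T *m z = 0).
Proof.
move=> _ _ z' [hz' _]; exists 1 => // z [hz _] hd.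
have hE : fn2 (z - z') <= 1.
  have : Num.sqrt (fn2 (z - z')) < Num.sqrt 1 by rewrite sqrtr1.
  by rewrite ltr_sqrt ?ltr01 // => /ltW.
rewrite opt_iff; split.
- move=> H; have S := sym_of_opt H.
  have -> : z^T *m z' = (z'^T *m z)^T by rewrite trmx_mul trmxK.
  have -> : (z'^T *m z)^T = z'^T *m z by apply/matrixP => x y; rewrite [LHS]mxE; exact: S.
  by rewrite subrr.
- move/eqP; rewrite subr_eq0 => /eqP hsym.
  exact: backward hz hz' hE hsym.
Qed.
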